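(* Let $1\le t\le\min(r,s)$ and $\tau_t=e_{r,r+1}e_{r-1,r+2}\cdots e_{r-t+1,r+t}\in B_{r,s}(\delta)$. Then (1) $(L_{r-a+1}+L_{r+a})\tau_t=0$ for every $1\le a\le t$; (2) $\big(-\sum_{i=r-t+1}^{r}e_{i,j}+\sum_{i=r+1}^{r+t}(i,j)\big)\tau_t=0$ for every $j$ with $r+t+1\le j\le r+s$.
   Context: $B_{r,s}(\delta)$ ($r,s\ge0$, $\delta\in\mathbb C$) is the walled Brauer algebra with basis the $(r,s)$-walled Brauer diagrams (two rows of $r+s$ vertices numbered $1,\dots,r+s$, wall after the first $r$ in each row, each vertex joined to exactly one other, vertical strands do not cross the wall, horizontal strands within a row cross it), product by stacking $d_1$ under $d_2$ (top of $d_1$ identified with bottom of $d_2$) and multiplying by $\delta^n$ for $n$ removed closed loops. $(a,b)$ ($a<b$ on the same side of the wall) is the transposition diagram; $e_{j,k}$ ($j\le r<k$) has horizontal strands joining $j,k$ in both rows, others straight. $L_k=\sum_{j=1}^{k-1}(j,k)$ for $k\le r$, $L_k=-\sum_{j=1}^r e_{j,k}+\sum_{j=r+1}^{k-1}(j,k)+\delta$ for $r<k\le r+s$. *)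

(* Defs.v *)
From HB Require Import structures.
From mathcomp Require Import all_boot all_order all_algebra algC.
Set Implicit Arguments. Unset Strict Implicit. Unset Printing Implicit Defensive.
Import Order.TTheory GRing.Theory Num.Theory.

Section WalledBrauer.
Variables (r s : nat).
Local Notation n := (r + s).

(* Vertices of a diagram: (true, i) = top-row vertex number i+1,
   (false, i) = bottom-row vertex number i+1, for i : 'I_(r+s). *)
Definition V := (bool * 'I_n)%type.

(* left side of the wall: vertex numbers 1..r, i.e. index i < r *)
Definition walled (x y : V) : bool :=
  if x.1 == y.1 then (x.2 < r) != (y.2 < r) else (x.2 < r) == (y.2 < r).

(* f encodes the perfect matching: f x is the vertex joined to x *)
Definition is_wbd (f : {ffun V -> V}) : bool :=
  [forall x, [&& f (f x) == x, f x != x & walled x (f x)]].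

Definition WBD := {f : {ffun V -> V} | is_wbd f}.

(* level 0 = bottom of d1, 1 = middle (top of d1 = bottom of d2), 2 = top of d2 *)
Definition W := ('I_3 * 'I_n)%type.
Definition lvl (k : nat) : 'I_3 := inZp k.
Definition emb1 (v : V) : W := (if v.1 then lvl 1 else lvl 0, v.2).
Definition emb2 (v : V) : W := (if v.1 then lvl 2 else lvl 1, v.2).
Definition outer (v : V) : W := (if v.1 then lvl 2 else lvl 0, v.2).

Definition comp_edge (d1 d2 : {ffun V -> V}) : rel W :=
  fun x y => [exists u, (emb1 u == x) && (emb1 (d1 u) == y)]
          || [exists u, (emb2 u == x) && (emb2 (d2 u) == y)].

Definition comp (d1 d2 : {ffun V -> V}) : {ffun V -> V} :=
  [ffun v => if [pick w : V | (w != v) &&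
                   connect (comp_edge d1 d2) (outer v) (outer w)] is Some w
             then w else v].

(* number of closed loops: components lying entirely in the middle row,
   counted by their (unique) roots *)
Definition loops (d1 d2 : {ffun V -> V}) : nat :=
  #|[set x : W | [&& val x.1 == 1%N :> nat, fingraph.root (comp_edge d1 d2) x == x &
        [forall y : W, connect (comp_edge d1 d2) x y ==> (val y.1 == 1%N :> nat)]]]|.

Definition WBA := {ffun WBD -> algC}.

Variable delta : algC.

Definition mulB (a b : WBA) : WBA :=
  [ffun d => (\sum_(d1 : WBD) \sum_(d2 : WBD | comp (val d1) (val d2) == val d)
               a d1 * b d2 * delta ^+ loops (val d1) (val d2))%R].

(* the basis element attached to a matching f (zero if f is not walled) *)
Definition dg (f : {ffun V -> V}) : WBA := [ffun d => ((val d == f) : nat)%:R%R].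

Definition oneB : WBA := dg [ffun v => (~~ v.1, v.2)].

Definition sw (a b m : nat) : nat := if m == a then b else if m == b then a else m.

(* transposition diagram (a,b), 1-based vertex numbers *)
Definition trB (a b : nat) : WBA :=
  dg [ffun v => (~~ v.1, insubd v.2 (sw a b (val v.2).+1).-1)].

(* e_{j,k}, 1-based: horizontal strands j--k in both rows, others straight *)
Definition eB (j k : nat) : WBA :=
  dg [ffun v => if ((val v.2).+1 == j) || ((val v.2).+1 == k)
               then (v.1, insubd v.2 (sw j k (val v.2).+1).-1)
               else (~~ v.1, v.2)].

Definition scB (c : algC) (x : WBA) : WBA := [ffun d => (c * x d)%R].

Definition LB (k : nat) : WBA :=
  if (k <= r)%N then (\sum_(1 <= j < k) trB j k)%R
  else (- \sum_(1 <= j < r.+1) eB j k + \sum_(r.+1 <= j < k) trB j k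
        + scB delta oneB)%R.

Fixpoint tauB (t : nat) : WBA :=
  match t with
  | 0 => oneB
  | t'.+1 => mulB (tauB t') (eB (r - t') (r + t'.+1))
  end.

End WalledBrauer.
Arguments mulB r s delta a b : clear implicits.
Arguments scB r s c x : clear implicits.

(* Main.v *)
Require Import Defs.
From HB Require Import structures.
From mathcomp Require Import all_boot all_order all_algebra algC.
From mathcomp Require Import zify.
Import Order.TTheory GRing.Theory Num.Theory.
Set Implicit Arguments. Unset Strict Implicit. Unset Printing Implicit Defensive.

Section Graph.
Variables (r s : nat).
Local Notation V := (V r s).
Local Notation W := (W r s).
Variables (f g : {ffun V -> V}).
Hypothesis invf : forall x, f (f x) = x.
Hypothesis invg : forall x, g (g x) = x.
Local Notation e := (comp_edge f g).

Definition mid (x : W) : bool := val x.1 == 1%N.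

Lemma edgeP x y : e x y ->
  (exists u, emb1 u = x /\ emb1 (f u) = y) \/ (exists u, emb2 u = x /\ emb2 (g u) = y).
Proof. by case/orP => /existsP[u /andP[/eqP h1 /eqP h2]]; [left|right]; exists u. Qed.

Lemma edge1 u x y : emb1 u = x -> emb1 (f u) = y -> e x y.
Proof. by move=> <- <-; apply/orP; left; apply/existsP; exists u; rewrite !eqxx. Qed.
Lemma edge2 u x y : emb2 u = x -> emb2 (g u) = y -> e x y.
Proof. by move=> <- <-; apply/orP; right; apply/existsP; exists u; rewrite !eqxx. Qed.

Lemma e01 m y : emb1 (f (false, m)) = y -> e (lvl 0, m) y.
Proof. exact: (edge1 (u := (false, m))). Qed.
Lemma e11 m y : emb1 (f (true, m)) = y -> e (lvl 1, m) y.
Proof. exact: (edge1 (u := (true, m))). Qed.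
Lemma e12 m y : emb2 (g (false, m)) = y -> e (lvl 1, m) y.
Proof. exact: (edge2 (u := (false, m))). Qed.
Lemma e22 m y : emb2 (g (true, m)) = y -> e (lvl 2, m) y.
Proof. exact: (edge2 (u := (true, m))). Qed.

Lemma edge_sym x y : e x y -> e y x.
Proof.
case/edgeP => -[u [<- <-]].
  by apply: (edge1 (u := f u)); rewrite ?invf.
by apply: (edge2 (u := g u)); rewrite ?invg.
Qed.

Lemma emb1_inj : injective (@emb1 r s).
Proof. by move=> [[] i] [[] j] /pair_equal_spec[h1 /= ->] //; move/(congr1 val): h1. Qed.
Lemma emb2_inj : injective (@emb2 r s).
Proof. by move=> [[] i] [[] j] /pair_equal_spec[h1 /= ->] //; move/(congr1 val): h1. Qed.
Lemma outer_inj : injective (@outer r s).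
Proof. by move=> [[] i] [[] j] /pair_equal_spec[h1 /= ->] //; move/(congr1 val): h1. Qed.
Lemma emb12_mid u u' : emb1 u = emb2 u' -> mid (emb1 u).
Proof. by case: u u' => [[] i] [[] j] /pair_equal_spec[h1 _] //; move/(congr1 val): h1. Qed.
Lemma outer_nmid u : ~~ mid (outer u).
Proof. by case: u => [[] i]. Qed.

Lemma sl1 u u' x : emb1 u = x -> emb1 u' = x -> emb1 (f u) = emb1 (f u').
Proof. by move=> h1 h2; have /emb1_inj -> : emb1 u = emb1 u' by rewrite h1 h2. Qed.
Lemma sl2 u u' x : emb2 u = x -> emb2 u' = x -> emb2 (g u) = emb2 (g u').
Proof. by move=> h1 h2; have /emb2_inj -> : emb2 u = emb2 u' by rewrite h1 h2. Qed.

Lemma nbr3 x y z w : e x y -> e x z -> e x w -> [\/ y = z, y = w | z = w].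
Proof.
move=> /edgeP[[u1 [h1 <-]]|[u1 [h1 <-]]] /edgeP[[u2 [h2 <-]]|[u2 [h2 <-]]]
        /edgeP[[u3 [h3 <-]]|[u3 [h3 <-]]].
- by apply: Or31; apply: sl1 h1 h2.
- by apply: Or31; apply: sl1 h1 h2.
- by apply: Or32; apply: sl1 h1 h3.
- by apply: Or33; apply: sl2 h2 h3.
- by apply: Or33; apply: sl1 h2 h3.
- by apply: Or32; apply: sl2 h1 h3.
- by apply: Or31; apply: sl2 h1 h2.
- by apply: Or31; apply: sl2 h1 h2.
Qed.

Lemma nbr_out x y z : ~~ mid x -> e x y -> e x z -> y = z.
Proof.
move=> nx /edgeP[[u1 [h1 <-]]|[u1 [h1 <-]]] /edgeP[[u2 [h2 <-]]|[u2 [h2 <-]]].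
- by apply: sl1 h1 h2.
- by have := emb12_mid (etrans h1 (esym h2)); rewrite h1 (negbTE nx).
- by have := emb12_mid (etrans h2 (esym h1)); rewrite h2 (negbTE nx).
- by apply: sl2 h1 h2.
Qed.

Fixpoint nbt (p : seq W) : bool :=
  if p is x :: p' then (if p' is _ :: z :: _ then x != z else true) && nbt p' else true.

Lemma nbt_nth d p k : nbt p -> (k.+2 < size p)%N -> nth d p k != nth d p k.+2.
Proof.
elim: p k => //= x p IH [|k].
  by case: p IH => [|y [|z p]] //= IH /andP[].
by case/andP=> _ h hk; apply: IH.
Qed.

Lemma connect_closed (S : pred W) x y :
  (forall a b, S a -> e a b -> S b) -> connect e x y -> S x -> S y.
Proof.
move=> cl /connectP[p pth ->]; elim: p x pth => //= z p IH x /andP[exz pth] Sx.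
by apply: IH pth _; apply: cl exz.
Qed.

Lemma comp_path v w q : path e (outer v) (rcons q (outer w)) -> all mid q ->
  nbt (outer v :: rcons q (outer w)) -> v != w -> Defs.comp f g v = w.
Proof.
move=> pth amq nb vw.
set S := outer v :: rcons q (outer w).
have szS : size S = (size q).+2 by rewrite /= size_rcons.
have hp : forall i, (i < (size q).+1)%N -> e (nth (outer v) S i) (nth (outer v) S i.+1).
  move=> i hi; move/(pathP (outer v)): pth => H.
  by apply: H; rewrite size_rcons.
have lastS : nth (outer v) S (size q).+1 = outer w by rewrite /= nth_rcons ltnn eqxx.
have cl : forall a b, a \in S -> e a b -> b \in S.
  move=> a b aS eab.
  have hk : (index a S < (size q).+2)%N by rewrite -szS index_mem.
  have na : nth (outer v) S (index a S) = a by rewrite nth_index.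
  move: hk na; case: (index a S) => [|k] hk na.
    have e1 := hp 0%N isT; rewrite na in e1.
    rewrite /= in na; rewrite (nbr_out _ eab e1) //; last by rewrite -na outer_nmid.
    by apply: mem_nth; rewrite szS.
  have ek := hp k hk; rewrite na in ek; have ek' := edge_sym ek.
  case: (ltnP k.+1 (size q).+1) => hk2.
    have ek2 := hp k.+1 hk2; rewrite na in ek2.
    case: (nbr3 eab ek' ek2) => [->|->|h]; try (apply: mem_nth; rewrite szS; lia).
    have hh : (k.+2 < size S)%N by rewrite szS; lia.
    by move: (nbt_nth (outer v) nb hh); rewrite h eqxx.
  have kq : k = size q by lia.
  subst k; rewrite lastS in na; rewrite -na in eab ek'.
  rewrite (nbr_out (outer_nmid w) eab ek'); apply: mem_nth; rewrite szS; lia.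
rewrite /Defs.comp ffunE; case: pickP => [w' /andP[nw' cw']|none].
  have : outer w' \in S.
    apply: (connect_closed (S := mem S)) cw' _; first by move=> a b; apply: cl.
    exact: mem_head.
  rewrite inE => /orP[/eqP/outer_inj h|]; first by rewrite h eqxx in nw'.
  rewrite mem_rcons inE => /orP[/eqP/outer_inj //|wq].
  by have := allP amq _ wq; rewrite (negbTE (outer_nmid w')).
have := none w; rewrite eq_sym vw /=.
have : outer w \in S by rewrite /S inE mem_rcons mem_head orbT.
by move/(path_connect pth) => ->.
Qed.

Lemma loops0 : (forall m, exists y, ~~ mid y /\ connect e (lvl 1, m) y) -> loops f g = 0%N.
Proof.
move=> H; apply/eqP; rewrite cards_eq0; apply/eqP/setP => x; rewrite !inE.
apply/negbTE; apply/negP => /and3P[mx _ /forallP al].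
have x1 : x = (lvl 1, x.2).
  case: x mx {al} => [l i] /= /eqP h; congr pair; apply: val_inj; rewrite /= h.
  by [].
have [y [ny cy]] := H x.2; rewrite -x1 in cy; have := al y; rewrite cy /= => my.
by rewrite /mid my in ny.
Qed.

Lemma csym : connect_sym e.
Proof. by apply: sym_connect_sym => x y; apply/idP/idP => /edge_sym. Qed.

Lemma mid_eq x : mid x -> x = (lvl 1, x.2).
Proof. by case: x => [l i] /= /eqP h; congr pair; apply: val_inj; rewrite /= h. Qed.

Lemma loops1 j k : j != k ->
  (forall b, e (lvl 1, j) b -> b = (lvl 1, k)) ->
  (forall b, e (lvl 1, k) b -> b = (lvl 1, j)) -> e (lvl 1, j) (lvl 1, k) ->
  (forall m, m != j -> m != k -> exists y, ~~ mid y /\ connect e (lvl 1, m) y) ->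
  loops f g = 1%N.
Proof.
move=> njk hj hk ejk H.
pose S : pred W := fun x => (x == (lvl 1, j)) || (x == (lvl 1, k)).
have clS : forall a b, S a -> e a b -> S b.
  move=> a b /orP[/eqP->|/eqP->] /[dup] eab.
    by move/hj => ->; rewrite /S eqxx orbT.
  by move/hk => ->; rewrite /S eqxx.
have midS : forall x, S x -> mid x by move=> x /orP[/eqP->|/eqP->].
set x0 : W := (lvl 1, j).
have S0 : S x0 by rewrite /S eqxx.
rewrite /loops (_ : [set x | _] = [set fingraph.root e x0]) ?cards1 //.
apply/setP => x; rewrite !inE; apply/idP/idP.
  case/and3P => mx /eqP rx /forallP al.
  have xe := mid_eq mx.
  have Sx : S x.
    case: (eqVneq x.2 j) => [h1|h1]; first by rewrite xe h1 /S eqxx.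
    case: (eqVneq x.2 k) => [h2|h2]; first by rewrite xe h2 /S eqxx orbT.
    have [y [ny cy]] := H _ h1 h2; rewrite -xe in cy.
    by move: (al y); rewrite cy /= => my; rewrite /mid my in ny.
  have cx : connect e x0 x.
    case/orP: Sx => /eqP->; first exact: connect0.
    exact: connect1.
  by rewrite -rx; apply/eqP/(fingraph.rootP csym); rewrite csym.
move/eqP=> ->.
have cr := connect_root e x0.
have Sr : S (fingraph.root e x0) by apply: connect_closed cr S0.
apply/and3P; split; first exact: midS.
  by rewrite (fingraph.root_root csym).
apply/forallP=> y; apply/implyP => cy.
apply: midS; apply: connect_closed S0 => //.
exact: connect_trans cr cy.
Qed.

Lemma nbr_mid m b : e (lvl 1, m) b -> b = emb1 (f (true, m)) \/ b = emb2 (g (false, m)).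
Proof.
case/edgeP=> -[u [h <-]]; [left|right].
  by have /emb1_inj -> : emb1 u = emb1 (true, m) by rewrite h.
by have /emb2_inj -> : emb2 u = emb2 (false, m) by rewrite h.
Qed.

End Graph.


Section Diag.
Variables (r s : nat).
Local Notation n := (r + s).
Local Notation V := (V r s).
Local Notation W := (W r s).

Definition Pd (σ : 'I_n -> 'I_n) : {ffun V -> V} := [ffun v => (~~ v.1, σ v.2)].
Definition rho (σ : 'I_n -> 'I_n) (v : V) : V := if v.1 then v else (false, σ v.2).
Definition Ee (j k : 'I_n) : {ffun V -> V} :=
  [ffun v => if v.2 == j then (v.1, k) else if v.2 == k then (v.1, j) else (~~ v.1, v.2)].

Lemma Pd_inv σ : (forall i, σ (σ i) = i) -> forall x, Pd σ (Pd σ x) = x.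
Proof. by move=> h [b i]; rewrite !ffunE /= negbK h. Qed.

Lemma Ee_inv j k : j != k -> forall x, Ee j k (Ee j k x) = x.
Proof.
move=> njk [b i]; rewrite !ffunE /=.
case: (eqVneq i j) => [->|hij] /=; first by rewrite [k == j]eq_sym (negbTE njk) eqxx.
case: (eqVneq i k) => [->|hik] /=; first by rewrite eqxx.
by rewrite (negbTE hij) (negbTE hik) negbK.
Qed.

Ltac path_tac :=
  repeat match goal with
  | |- is_true (_ && _) => apply/andP; split
  | |- is_true (path _ _ _) => rewrite /= ?andbT
  end.

Lemma compP σ (g : {ffun V -> V}) : (forall i, σ (σ i) = i) ->
  (forall x, g (g x) = x) -> (forall x, g x != x) ->
  Defs.comp (Pd σ) g = [ffun v => rho σ (g (rho σ v))] /\ loops (Pd σ) g = 0%N.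
Proof.
move=> hs ig fg; have ip := Pd_inv hs.
split.
  apply/ffunP => -[[] i]; rewrite [RHS]ffunE /rho /=.
    case Eg: (g (true, i)) => [[] p] /=.
      apply: (comp_path ip ig (q := [::])) => //=.
        by rewrite andbT; apply: e22; rewrite Eg.
      by rewrite -Eg eq_sym fg.
    apply: (comp_path ip ig (q := [:: (lvl 1, p)])) => //=.
    apply/and3P; split => //.
      by apply: e22; rewrite Eg.
    by apply: e11; rewrite ffunE.
  case Eg: (g (false, σ i)) => [[] p] /=.
    apply: (comp_path ip ig (q := [:: (lvl 1, σ i)])) => //=.
    apply/and3P; split => //.
      by apply: e01; rewrite ffunE.
    by apply: e12; rewrite Eg.
  have pn : p != σ i by apply/eqP => h; move: (fg (false, σ i)); rewrite Eg h eqxx.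
  apply: (comp_path ip ig (q := [:: (lvl 1, σ i); (lvl 1, p)])) => //=.
    apply/and4P; split => //.
    - by apply: e01; rewrite ffunE.
    - by apply: e12; rewrite Eg.
    - by apply: e11; rewrite ffunE.
  by apply/eqP => -[h]; move: pn; rewrite h hs eqxx.
apply: loops0 => // m; exists (lvl 0, σ m); split => //.
by apply: connect1; apply: e11; rewrite ffunE.
Qed.

Lemma EeE1 j k b : Ee j k (b, j) = (b, k).
Proof. by rewrite ffunE /= eqxx. Qed.
Lemma EeE2 j k b : j != k -> Ee j k (b, k) = (b, j).
Proof. by move=> h; rewrite ffunE /= eq_sym (negbTE h) eqxx. Qed.
Lemma EeE3 j k b i : i != j -> i != k -> Ee j k (b, i) = (~~ b, i).
Proof. by move=> h1 h2; rewrite ffunE /= (negbTE h1) (negbTE h2). Qed.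

Lemma inv_eq (f : {ffun V -> V}) x y : (forall x, f (f x) = x) -> f x = y -> f y = x.
Proof. by move=> h <-. Qed.

Lemma compTE (f : {ffun V -> V}) j k : (forall x, f (f x) = x) -> (forall x, f x != x) ->
  j != k -> f (true, j) = (false, j) -> f (true, k) = (false, k) ->
  Defs.comp f (Ee j k) = [ffun v => if (v.2 == j) || (v.2 == k) then Ee j k v else f v]
  /\ loops f (Ee j k) = 0%N.
Proof.
move=> fi ff njk fj fk; have ie := Ee_inv njk.
have fj' := inv_eq fi fj; have fk' := inv_eq fi fk.
split.
  apply/ffunP => -[b i]; rewrite [RHS]ffunE /=.
  case: (eqVneq i j) => [->|hij] /=.
    rewrite EeE1; case: b.
      apply: (comp_path fi ie (q := [::])) => //=.
        by rewrite andbT; apply: e22; rewrite EeE1.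
    apply: (comp_path fi ie (q := [:: (lvl 1, j); (lvl 1, k)])) => //=.
      apply/and4P; split => //.
      - by apply: e01; rewrite fj'.
      - by apply: e12; rewrite EeE1.
      - by apply: e11; rewrite fk.
  case: (eqVneq i k) => [->|hik] /=.
    rewrite EeE2 //; case: b.
      apply: (comp_path fi ie (q := [::])) => //=.
        by rewrite andbT; apply: e22; rewrite EeE2.
      by rewrite eq_sym.
    apply: (comp_path fi ie (q := [:: (lvl 1, k); (lvl 1, j)])) => //=.
      apply/and4P; split => //.
      - by apply: e01; rewrite fk'.
      - by apply: e12; rewrite EeE2.
      - by apply: e11; rewrite fj.
    by rewrite eq_sym.
  case: b.
    case Ef: (f (true, i)) => [[] m].
      have fm := inv_eq fi Ef.
      have mj : m != j by apply/eqP => h; move: fm; rewrite h fj.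
      have mk : m != k by apply/eqP => h; move: fm; rewrite h fk.
      have mi : m != i by apply/eqP => h; move: (ff (true, i)); rewrite Ef h eqxx.
      apply: (comp_path fi ie (q := [:: (lvl 1, i); (lvl 1, m)])) => //=.
        apply/and4P; split => //.
        - by apply: e22; rewrite EeE3.
        - by apply: e11; rewrite Ef.
        - by apply: e12; rewrite EeE3.
      by rewrite xpair_eqE /= eq_sym.
    apply: (comp_path fi ie (q := [:: (lvl 1, i)])) => //=.
    apply/and3P; split => //.
    - by apply: e22; rewrite EeE3.
    - by apply: e11; rewrite Ef.
  case Ef: (f (false, i)) => [[] m].
    have fm := inv_eq fi Ef.
    have mj : m != j by apply/eqP => h; move: fm; rewrite h fj => -[] hh; rewrite hh eqxx in hij.
    have mk : m != k by apply/eqP => h; move: fm; rewrite h fk => -[] hh; rewrite hh eqxx in hik.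
    apply: (comp_path fi ie (q := [:: (lvl 1, m)])) => //=.
    apply/and3P; split => //.
    - by apply: e01; rewrite Ef.
    - by apply: e12; rewrite EeE3.
  apply: (comp_path fi ie (q := [::])) => //=.
    by rewrite andbT; apply: e01; rewrite Ef.
  by rewrite -Ef eq_sym ff.
apply: loops0 => // m.
case: (eqVneq m j) => [->|hj].
  by exists (lvl 0, j); split => //; apply: connect1; apply: e11; rewrite fj.
case: (eqVneq m k) => [->|hk].
  by exists (lvl 0, k); split => //; apply: connect1; apply: e11; rewrite fk.
by exists (lvl 2, m); split => //; apply: connect1; apply: e12; rewrite EeE3.
Qed.

Ltac simp_all0 := repeat (rewrite ?eqxx /=; match goal with
 | h : is_true (?a != ?b) |- context [?a == ?b] => rewrite (negbTE h)
 | h : is_true (?a != ?b) |- context [?b == ?a] => rewrite [b == a]eq_sym (negbTE h)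
 | H : ?a = _ |- context [?a] => rewrite H
 | |- context [@fun_of_fin _ _ _ (Ee ?j ?k) (@pair _ _ ?b ?j)] => rewrite EeE1
 | |- context [@fun_of_fin _ _ _ (Ee ?j ?k) (@pair _ _ ?b ?k)] => rewrite EeE2; [|by rewrite // eq_sym]
 | |- context [@fun_of_fin _ _ _ (Ee ?j ?k) (@pair _ _ ?b ?i)] => rewrite EeE3; [|by rewrite // eq_sym|by rewrite // eq_sym]
 end); rewrite ?eqxx /=.

Ltac fpf_tac := match goal with
  Hf : forall x, is_true (?F x != x), H : ?F ?x = ?y
   |- is_true (?x != ?y) => rewrite -H eq_sym; exact: Hf end.

Ltac simp_all := simp_all0.
Ltac pt := rewrite /outer /=; repeat (apply/andP; split); try done; rewrite /=;
  first [ by apply: e01; simp_all | by apply: e11; simp_all | by apply: e12; simp_all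
        | by apply: e22; simp_all | by simp_all | by rewrite eq_sym; simp_all | fpf_tac ].

Lemma compES (T : {ffun V -> V}) j k m (σ : 'I_n -> 'I_n) :
  (forall x, T (T x) = x) -> (forall x, T x != x) -> j != k ->
  T (false, k) = (false, m) -> m != j ->
  σ j = m -> σ m = j -> (forall x, x != j -> x != m -> σ x = x) ->
  Defs.comp (Ee j k) T = Defs.comp (Pd σ) T /\ loops (Ee j k) T = 0%N.
Proof.
move=> Ti Tf njk Tk mj sj sm so.
have hs : forall i, σ (σ i) = i.
  move=> i; case: (eqVneq i j) => [->|h1]; first by rewrite sj sm.
  case: (eqVneq i m) => [->|h2]; first by rewrite sm sj.
  by rewrite !so.
have ie := Ee_inv njk.
have Tm := inv_eq Ti Tk.
have mk : m != k by apply/eqP => h; move: (Tf (false, k)); rewrite Tk h eqxx.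
have km : k != m by rewrite eq_sym.
have jm : j != m by rewrite eq_sym.
have kj : k != j by rewrite eq_sym.
have sk : σ k = k by rewrite so.
split.
  rewrite (compP hs Ti Tf).1.
  apply/ffunP => -[b i]; rewrite [RHS]ffunE /rho /=.
  case: b => /=.
    case ET: (T (true, i)) => [[] p] /=.
      apply: (comp_path ie Ti (q := [::])) => //=; pt.
    have Tp := inv_eq Ti ET.
    have pk : p != k by apply/eqP => h; move: Tp; rewrite h Tk.
    have pm : p != m by apply/eqP => h; move: Tp; rewrite h Tm.
    case: (eqVneq p j) => [pj|pj].
      subst p; rewrite sj.
      apply: (comp_path ie Ti (q := [:: (lvl 1, j); (lvl 1, k); (lvl 1, m)])) => //=; pt.
    rewrite so //.
    apply: (comp_path ie Ti (q := [:: (lvl 1, p)])) => //=; pt.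
  case: (eqVneq i j) => [->|ij].
    rewrite sj Tm /= sk.
    apply: (comp_path ie Ti (q := [::])) => //=; pt.
  case: (eqVneq i k) => [->|ik].
    rewrite sk Tk /= sm.
    apply: (comp_path ie Ti (q := [::])) => //=; pt.
  case: (eqVneq i m) => [->|im].
    rewrite sm; case ET: (T (false, j)) => [[] p] /=.
      apply: (comp_path ie Ti (q := [:: (lvl 1, m); (lvl 1, k); (lvl 1, j)])) => //=; pt.
    have Tp := inv_eq Ti ET.
    have pj : p != j by apply/eqP => h; move: (Tf (false, j)); rewrite ET h eqxx.
    have pk : p != k by apply/eqP => h; move: Tp; rewrite h Tk => -[] /eqP; rewrite (negbTE mj).
    have pm : p != m by apply/eqP => h; move: Tp; rewrite h Tm => -[] /eqP; rewrite (negbTE kj).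
    rewrite so //.
    apply: (comp_path ie Ti (q := [:: (lvl 1, m); (lvl 1, k); (lvl 1, j); (lvl 1, p)])) => //=; pt.
  rewrite so //.
  case ET: (T (false, i)) => [[] p] /=.
    apply: (comp_path ie Ti (q := [:: (lvl 1, i)])) => //=; pt.
  have Tp := inv_eq Ti ET.
  have pi : p != i by apply/eqP => h; move: (Tf (false, i)); rewrite ET h eqxx.
  have pk : p != k by apply/eqP => h; move: Tp; rewrite h Tk => -[] /eqP; rewrite eq_sym (negbTE im).
  have pm : p != m by apply/eqP => h; move: Tp; rewrite h Tm => -[] /eqP; rewrite eq_sym (negbTE ik).
  case: (eqVneq p j) => [pj|pj].
    subst p; rewrite sj.
    apply: (comp_path ie Ti (q := [:: (lvl 1, i); (lvl 1, j); (lvl 1, k); (lvl 1, m)])) => //=; pt.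
  rewrite so //.
  apply: (comp_path ie Ti (q := [:: (lvl 1, i); (lvl 1, p)])) => //=; pt.
apply: loops0 => // q.
have cm : connect (comp_edge (Ee j k) T) (lvl 1, m) (lvl 0, m).
  by apply: connect1; apply: e11; rewrite EeE3.
have ck : connect (comp_edge (Ee j k) T) (lvl 1, k) (lvl 0, m).
  by apply: connect_trans cm; apply: connect1; apply: e12; rewrite Tk.
case: (eqVneq q j) => [->|hj].
  by exists (lvl 0, m); split => //; apply: connect_trans ck; apply: connect1; apply: e11; rewrite EeE1.
case: (eqVneq q k) => [->|hk].
  by exists (lvl 0, m).
by exists (lvl 0, q); split => //; apply: connect1; apply: e11; rewrite EeE3.
Qed.

Lemma compEL (T : {ffun V -> V}) j k :
  (forall x, T (T x) = x) -> (forall x, T x != x) -> j != k ->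
  T (false, k) = (false, j) ->
  Defs.comp (Ee j k) T = T /\ loops (Ee j k) T = 1%N.
Proof.
move=> Ti Tf njk Tk.
have ie := Ee_inv njk.
have Tj := inv_eq Ti Tk.
have kj : k != j by rewrite eq_sym.
split.
  apply/ffunP => -[b i].
  case: b => /=.
    case ET: (T (true, i)) => [[] p] /=.
      apply: (comp_path ie Ti (q := [::])) => //=; pt.
    have Tp := inv_eq Ti ET.
    have pk : p != k by apply/eqP => h; move: Tp; rewrite h Tk.
    have pj : p != j by apply/eqP => h; move: Tp; rewrite h Tj.
    apply: (comp_path ie Ti (q := [:: (lvl 1, p)])) => //=; pt.
  case: (eqVneq i j) => [->|ij].
    rewrite Tj.
    apply: (comp_path ie Ti (q := [::])) => //=; pt.
  case: (eqVneq i k) => [->|ik].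
    rewrite Tk.
    apply: (comp_path ie Ti (q := [::])) => //=; pt.
  case ET: (T (false, i)) => [[] p] /=.
    apply: (comp_path ie Ti (q := [:: (lvl 1, i)])) => //=; pt.
  have Tp := inv_eq Ti ET.
  have pk : p != k by apply/eqP => h; move: Tp; rewrite h Tk => -[] /eqP; rewrite eq_sym (negbTE ij).
  have pj : p != j by apply/eqP => h; move: Tp; rewrite h Tj => -[] /eqP; rewrite eq_sym (negbTE ik).
  apply: (comp_path ie Ti (q := [:: (lvl 1, i); (lvl 1, p)])) => //=; pt.
apply: (loops1 ie Ti njk).
- by move=> b /nbr_mid [->|->]; rewrite ?EeE1 ?Tj.
- by move=> b /nbr_mid [->|->]; rewrite ?EeE2 ?Tk.
- by apply: e11; rewrite EeE1.
move=> m mj mk; exists (lvl 0, m); split => //.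
by apply: connect1; apply: e11; rewrite EeE3.
Qed.

End Diag.


Section Tau.
Variables (r s : nat).
Local Notation n := (r + s).
Local Notation V := (V r s).

Definition mir (i : 'I_n) : 'I_n := insubd i (r + r - i.+1).
Definition Tt (t : nat) : {ffun V -> V} :=
  [ffun v : V => if (r - t <= v.2 < r + t)%N then (v.1, mir v.2) else (~~ v.1, v.2)].

Variable t : nat.
Hypothesis tr : (t <= r)%N.
Hypothesis ts : (t <= s)%N.

Lemma mir_val (i : 'I_n) : (r - t <= i < r + t)%N -> val (mir i) = r + r - i.+1.
Proof. by move=> h; rewrite /mir val_insubd ifT //; case/andP: h => h1 h2; lia. Qed.

Lemma mir_in (i : 'I_n) : (r - t <= i < r + t)%N -> (r - t <= mir i < r + t)%N.
Proof. by move=> h; rewrite mir_val //; case/andP: h => h1 h2; apply/andP; split; lia. Qed.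

Lemma mir_mir (i : 'I_n) : (r - t <= i < r + t)%N -> mir (mir i) = i.
Proof. move=> h; apply: val_inj; rewrite (mir_val (mir_in h)) (mir_val h) /=; case/andP: h => h1 h2; lia. Qed.

Lemma mir_neq (i : 'I_n) : (r - t <= i < r + t)%N -> mir i != i.
Proof. move=> h; apply/eqP => /(congr1 val); rewrite mir_val //=; case/andP: h => h1 h2; lia. Qed.

Lemma mir_side (i : 'I_n) : (r - t <= i < r + t)%N -> (i < r)%N != (mir i < r)%N.
Proof. move=> h; rewrite mir_val //=; case/andP: h => h1 h3; case: (ltnP i r) => h2; apply/eqP; lia. Qed.

Lemma Tt_inv x : Tt t (Tt t x) = x.
Proof.
case: x => b i; rewrite [Tt t (b, i)]ffunE /=.
case: ifP => h /=; rewrite ffunE /=; first by rewrite (mir_in h) mir_mir.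
by rewrite h negbK.
Qed.

Lemma Tt_fpf x : Tt t x != x.
Proof.
case: x => b i; rewrite !ffunE /=; case: ifP => h.
  by rewrite xpair_eqE negb_and mir_neq ?orbT.
by rewrite xpair_eqE; case: b.
Qed.

Lemma Tt_walled x : walled x (Tt t x).
Proof.
case: x => b i; rewrite ffunE; case: ifP => h; rewrite /walled /=.
  by rewrite eqxx mir_side.
by case: b {h}; rewrite eqxx.
Qed.

End Tau.

Lemma wbdP r s (f : {ffun V r s -> V r s}) :
  (forall x, f (f x) = x) -> (forall x, f x != x) -> (forall x, walled x (f x)) -> is_wbd f.
Proof. by move=> h1 h2 h3; apply/forallP => x; rewrite h1 eqxx h2 h3. Qed.

Lemma Tt_step r s t (J K : 'I_(r + s)) : (t.+1 <= r)%N -> (t.+1 <= s)%N ->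
  val J = (r - t.+1)%N -> val K = (r + t)%N ->
  Defs.comp (Tt r s t) (Ee J K) = Tt r s t.+1 /\ loops (Tt r s t) (Ee J K) = 0%N.
Proof.
move=> tr ts hJ hK.
have tr' : (t <= r)%N by lia.
have ts' : (t <= s)%N by lia.
have njk : J != K by apply/eqP => /(congr1 val); rewrite hJ hK; lia.
have fJ : Tt r s t (true, J) = (false, J) by rewrite ffunE /= hJ ifF //; lia.
have fK : Tt r s t (true, K) = (false, K) by rewrite ffunE /= hK ifF //; lia.
have [c l] := compTE (Tt_inv tr' ts') (Tt_fpf tr' ts') njk fJ fK.
split => //; rewrite c; apply/ffunP => -[b i]; rewrite [LHS]ffunE [RHS]ffunE /=.
case: (eqVneq i J) => [->|iJ] /=.
  rewrite EeE1 hJ ifT; last by lia.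
  congr pair; apply: val_inj; rewrite (@mir_val r s t.+1 tr ts) ?hJ ?hK //=; lia.
case: (eqVneq i K) => [->|iK] /=.
  rewrite EeE2 // hK ifT; last by lia.
  congr pair; apply: val_inj; rewrite (@mir_val r s t.+1 tr ts) ?hJ ?hK //=; lia.
rewrite ffunE /=.
move/eqP: iJ; move/eqP: iK => iK iJ.
have iJ' : (i : nat) <> (r - t.+1)%N by move=> h; apply: iJ; apply: val_inj; rewrite /= h hJ.
have iK' : (i : nat) <> (r + t)%N by move=> h; apply: iK; apply: val_inj; rewrite /= h hK.
have -> : (r - t <= i < r + t)%N = (r - t.+1 <= i < r + t.+1)%N.
  by apply/idP/idP => /andP[h1 h2]; apply/andP; split; lia.
by [].
Qed.

Section Conv.
Variables (r s : nat).
Local Notation n := (r + s).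
Local Notation V := (V r s).

Definition trs (a b : nat) : 'I_n -> 'I_n := fun i => insubd i (sw a b i.+1).-1.

Lemma trBE a b : trB r s a b = dg (Pd (trs a b)).
Proof. by []. Qed.

Lemma insubd_ord (i j : 'I_n) m : m = val j -> insubd i m = j.
Proof. by move=> ->; apply: val_inj; rewrite val_insubd ltn_ord. Qed.

Section Props.
Variables (a b : nat) (A B : 'I_n).
Hypotheses (hA : val A = a.-1) (hB : val B = b.-1) (a0 : (0 < a)%N) (b0 : (0 < b)%N).

Lemma trsA : trs a b A = B.
Proof. by rewrite /trs hA prednK // /sw eqxx; apply: insubd_ord. Qed.

Lemma trsB : trs a b B = A.
Proof.
rewrite /trs hB prednK // /sw; case: eqP => [->|_]; last by rewrite eqxx; apply: insubd_ord.
by apply: insubd_ord; rewrite hA.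
Qed.

Lemma trsO i : i != A -> i != B -> trs a b i = i.
Proof.
move=> /eqP iA /eqP iB; rewrite /trs /sw.
have ia : (i.+1 == a) = false.
  by apply/negbTE/eqP => h; apply: iA; apply: val_inj; rewrite hA -h.
have ib : (i.+1 == b) = false.
  by apply/negbTE/eqP => h; apply: iB; apply: val_inj; rewrite hB -h.
by rewrite ia ib; apply: insubd_ord.
Qed.

Lemma eBE : A != B -> eB r s a b = dg (Ee A B).
Proof.
move=> nAB; congr dg; apply/ffunP => -[x i]; rewrite !ffunE /=.
case: (eqVneq i A) => [->|iA].
  by rewrite hA prednK // eqxx /sw eqxx (insubd_ord _ (esym hB)).
case: (eqVneq i B) => [->|iB].
  rewrite hB prednK // eqxx orbT /sw; case: eqP => [h|_]; last by rewrite eqxx (insubd_ord _ (esym hA)).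
  by exfalso; move/eqP: nAB; apply; apply: val_inj; rewrite hA hB h.
have ia : (i.+1 == a) = false.
  by apply/negbTE/eqP => h; move/eqP: iA; apply; apply: val_inj; rewrite hA -h.
have ib : (i.+1 == b) = false.
  by apply/negbTE/eqP => h; move/eqP: iB; apply; apply: val_inj; rewrite hB -h.
by rewrite ia ib.
Qed.

End Props.

Lemma Ee_sym (A B : 'I_n) : A != B -> Ee A B = Ee B A.
Proof.
move=> nAB; apply/ffunP => -[x i]; rewrite !ffunE /=.
case: (eqVneq i A) => [->|iA]; first by rewrite (negbTE nAB).
by [].
Qed.

Lemma Pd_wbd (σ : 'I_n -> 'I_n) : (forall i, σ (σ i) = i) -> (forall i, (σ i < r)%N = (i < r)%N) -> is_wbd (Pd σ).
Proof.
move=> h1 h2; apply: wbdP; first exact: Pd_inv.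
  by move=> [x i]; rewrite ffunE xpair_eqE; case: x.
by move=> [x i]; rewrite ffunE /walled /= h2 eqxx; case: x.
Qed.

Lemma Ee_wbd (A B : 'I_n) : (A < r)%N -> (r <= B)%N -> is_wbd (Ee A B).
Proof.
move=> hA hB; have nAB : A != B by apply/eqP => h; move: hA; rewrite h ltnNge hB.
apply: wbdP; first exact: Ee_inv.
  move=> [x i]; rewrite ffunE /=.
  case: (eqVneq i A) => [->|iA]; first by rewrite xpair_eqE eq_sym (negbTE nAB) andbF.
  case: (eqVneq i B) => [->|iB]; first by rewrite xpair_eqE (negbTE nAB) andbF.
  by rewrite xpair_eqE; case: x.
move=> [x i]; rewrite ffunE /walled /=.
case: (eqVneq i A) => [->|iA] /=; first by rewrite eqxx hA ltnNge hB.
case: (eqVneq i B) => [->|iB] /=; first by rewrite eqxx hA ltnNge hB.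
by case: x; rewrite eqxx.
Qed.

Lemma Tt_wbd t : (t <= r)%N -> (t <= s)%N -> is_wbd (Tt r s t).
Proof. by move=> h1 h2; apply: wbdP; [exact: Tt_inv|exact: Tt_fpf|exact: Tt_walled]. Qed.

End Conv.

Section Alg.
Local Open Scope ring_scope.
Variables (r s : nat) (delta : algC).
Local Notation mB := (mulB r s delta).

Lemma mulBDl x y z : mB (x + y) z = mB x z + mB y z.
Proof.
apply/ffunP => d; rewrite !ffunE -big_split; apply: eq_bigr => d1 _.
rewrite -big_split; apply: eq_bigr => d2 _; rewrite !ffunE.
by rewrite !mulrDl.
Qed.

Lemma mulB0l z : mB 0 z = 0.
Proof.
apply/ffunP => d; rewrite !ffunE big1 // => d1 _; rewrite big1 // => d2 _.
by rewrite ffunE !mul0r.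
Qed.

Lemma mulBNl x z : mB (- x) z = - mB x z.
Proof.
apply/ffunP => d; rewrite !ffunE -sumrN; apply: eq_bigr => d1 _.
rewrite -sumrN; apply: eq_bigr => d2 _; rewrite !ffunE.
by rewrite !mulNr.
Qed.

Lemma mulB_suml I (rr : seq I) (P : pred I) (F : I -> WBA r s) z :
  mB (\sum_(i <- rr | P i) F i) z = \sum_(i <- rr | P i) mB (F i) z.
Proof. exact: (big_morph (fun x => mB x z) (fun x y => mulBDl x y z) (mulB0l z)). Qed.

Lemma mulB_scl c x z : mB (scB r s c x) z = scB r s c (mB x z).
Proof.
apply/ffunP => d; rewrite !ffunE mulr_sumr; apply: eq_bigr => d1 _.
rewrite mulr_sumr; apply: eq_bigr => d2 _; rewrite !ffunE.
by rewrite !mulrA.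
Qed.

Lemma mulB_dg f g : is_wbd f -> is_wbd g ->
  mB (dg f) (dg g) = [ffun d => delta ^+ loops f g * dg (Defs.comp f g) d].
Proof.
move=> hf hg; apply/ffunP => d; rewrite !ffunE.
pose df : WBD r s := exist _ f hf.
pose dg' : WBD r s := exist _ g hg.
rewrite (bigD1 df) //= [X in _ + X]big1 ?addr0; last first.
  move=> d1 nd1; rewrite big1 // => d2 _; rewrite ffunE.
  have -> : (sval d1 == f) = false.
    by apply/negbTE; apply: contra nd1 => /eqP h; apply/eqP; apply: val_inj.
  by rewrite !mul0r.
rewrite big_mkcond (bigD1 dg') //= big1 ?addr0; last first.
  move=> d2 nd2; case: ifP => // _; rewrite !ffunE.
  have -> : (sval d2 == g) = false.
    by apply/negbTE; apply: contra nd2 => /eqP h; apply/eqP; apply: val_inj.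
  by rewrite mulr0 mul0r.
rewrite !ffunE /= !eqxx mul1r mul1r eq_sym.
by case: eqP => _; rewrite ?mulr1 ?mulr0.
Qed.

Lemma mulB_dg0 f g : is_wbd f -> is_wbd g -> loops f g = 0%N ->
  mB (dg f) (dg g) = dg (Defs.comp f g).
Proof. by move=> hf hg l0; rewrite mulB_dg // l0; apply/ffunP => d; rewrite ffunE mul1r. Qed.

Lemma mulB_dg1 f g : is_wbd f -> is_wbd g -> loops f g = 1%N ->
  mB (dg f) (dg g) = scB r s delta (dg (Defs.comp f g)).
Proof. by move=> hf hg l0; rewrite mulB_dg // l0; apply/ffunP => d; rewrite !ffunE expr1. Qed.

End Alg.

Lemma tauE r s delta t : (t <= minn r s)%N -> tauB r s delta t = dg (Tt r s t).
Proof.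
elim: t => [_|t IH h].
  rewrite /= /oneB; congr dg; apply/ffunP => -[b i]; rewrite !ffunE /=.
  by have -> : (r - 0 <= i < r + 0)%N = false by apply/negbTE/negP => /andP[]; lia.
have tr : (t.+1 <= r)%N by lia.
have ts : (t.+1 <= s)%N by lia.
rewrite /= IH; last by lia.
have pJ : (r - t.+1 < r + s)%N by lia.
have pK : (r + t < r + s)%N by lia.
pose J : 'I_(r + s) := Ordinal pJ.
pose K : 'I_(r + s) := Ordinal pK.
have hJ : val J = r - t.+1 by [].
have hK : val K = r + t by [].
have njk : J != K by apply/eqP => /(congr1 val) /=; lia.
rewrite (@eBE r s (r - t) (r + t.+1) J K) //; try lia.
have [c l] := Tt_step tr ts hJ hK.
rewrite mulB_dg0 ?c //.
  by apply: Tt_wbd; lia.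
by apply: Ee_wbd => /=; lia.
Qed.


Section Main.
Local Open Scope ring_scope.
Variables (r s : nat) (delta : algC) (t : nat).
Hypotheses (tr : (t <= r)%N) (ts : (t <= s)%N).
Local Notation n := (r + s).
Local Notation mB := (mulB r s delta).
Local Notation T := (Tt r s t).

Lemma Ti : forall x, T (T x) = x. Proof. exact: Tt_inv. Qed.
Lemma Tf : forall x, T x != x. Proof. exact: Tt_fpf. Qed.
Lemma Tw : is_wbd T. Proof. exact: Tt_wbd. Qed.

Lemma Dswap (J K M A B : 'I_n) (a b : nat) : is_wbd (Ee J K) -> J != K ->
  T (false, K) = (false, M) -> M != J ->
  val A = a.-1 -> val B = b.-1 -> (0 < a)%N -> (0 < b)%N ->
  (A = J /\ B = M) \/ (A = M /\ B = J) -> (A < r)%N = (B < r)%N ->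
  mB (dg (Ee J K)) (dg T) = mB (trB r s a b) (dg T).
Proof.
move=> wE njk TK mj hA hB a0 b0 hAB side.
have nAB : A != B by case: hAB => -[-> ->] //; rewrite eq_sym.
have sA : @trs r s a b A = B by apply: trsA.
have sB : @trs r s a b B = A by apply: trsB.
have sO : forall x, x != A -> x != B -> @trs r s a b x = x by move=> x; apply: trsO.
have sJ : @trs r s a b J = M by case: hAB => -[<- <-].
have sM : @trs r s a b M = J by case: hAB => -[<- <-].
have so : forall x, x != J -> x != M -> @trs r s a b x = x.
  by move=> x h1 h2; apply: sO; case: hAB => -[e1 e2]; rewrite ?e1 ?e2.
have [c l] := compES Ti Tf njk TK mj sJ sM so.
have hs : forall i, @trs r s a b (@trs r s a b i) = i.
  move=> i; case: (eqVneq i A) => [->|h1]; first by rewrite sA sB.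
  case: (eqVneq i B) => [->|h2]; first by rewrite sB sA.
  by rewrite !sO.
have hside : forall i, (@trs r s a b i < r)%N = (i < r)%N.
  move=> i; case: (eqVneq i A) => [->|h1]; first by rewrite sA side.
  case: (eqVneq i B) => [->|h2]; first by rewrite sB side.
  by rewrite sO.
by rewrite trBE (mulB_dg0 delta wE Tw l) (mulB_dg0 delta (Pd_wbd hs hside) Tw (compP hs Ti Tf).2) c.
Qed.

Lemma Done : mB (oneB r s) (dg T) = dg T.
Proof.
have -> : oneB r s = dg (Pd id) by [].
rewrite mulB_dg0 //; first last.
- exact: (compP (σ := id) (fun i => erefl) Ti Tf).2.
- exact: Tw.
- by apply: Pd_wbd.
rewrite (compP (σ := id) (fun i => erefl) Ti Tf).1; congr dg.
by apply/ffunP => -[[] i]; rewrite ffunE /rho /=; case: (T _) => [[] p].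
Qed.

Lemma TfalseY (Y M : 'I_n) : (r - t <= Y < r + t)%N -> val M = (r + r - Y.+1)%N ->
  T (false, Y) = (false, M).
Proof.
move=> hY hM; rewrite ffunE /= hY; congr pair; apply: val_inj.
by rewrite (mir_val tr ts hY) hM.
Qed.

Lemma caseA j a : (1 <= a <= t)%N -> (1 <= j)%N -> (j < r - a + 1)%N ->
  mB (eB r s j (r + a)) (dg T) = mB (trB r s j (r - a + 1)) (dg T).
Proof.
move=> /andP[a1 at'] j1 jc.
have pX : (j.-1 < n)%N by lia.
have pY : ((r + a).-1 < n)%N by lia.
have pM : ((r - a + 1).-1 < n)%N by lia.
pose X : 'I_n := Ordinal pX; pose Y : 'I_n := Ordinal pY; pose M : 'I_n := Ordinal pM.
have nXY : X != Y by apply/eqP => /(congr1 val) /=; lia.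
rewrite (@eBE r s j (r + a) X Y) //; try lia.
apply: (@Dswap X Y M X M) => //; try lia.
- by apply: Ee_wbd => /=; lia.
- by apply: TfalseY => /=; [apply/andP; split; lia | lia].
- by apply/eqP => /(congr1 val) /=; lia.
- by left.
- by rewrite /=; apply/idP/idP => _; lia.
Qed.

Lemma caseL a : (1 <= a <= t)%N ->
  mB (eB r s (r - a + 1) (r + a)) (dg T) = scB r s delta (dg T).
Proof.
move=> /andP[a1 at'].
have pY : ((r + a).-1 < n)%N by lia.
have pM : ((r - a + 1).-1 < n)%N by lia.
pose Y : 'I_n := Ordinal pY; pose M : 'I_n := Ordinal pM.
have nMY : M != Y by apply/eqP => /(congr1 val) /=; lia.
rewrite (@eBE r s (r - a + 1) (r + a) M Y) //; try lia.
have TY : T (false, Y) = (false, M).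
  by apply: TfalseY => /=; [apply/andP; split; lia | lia].
have [c l] := compEL Ti Tf nMY TY.
rewrite (mulB_dg1 delta _ Tw l) ?c //.
by apply: Ee_wbd => /=; lia.
Qed.

Lemma caseB i k : (r - t + 1 <= i <= r)%N -> (r < k <= n)%N -> k.-1 <> (r + r - i)%N ->
  mB (eB r s i k) (dg T) = mB (trB r s (r + r + 1 - i) k) (dg T).
Proof.
move=> /andP[i1 i2] /andP[k1 k2] kM.
have pX : (i.-1 < n)%N by lia.
have pY : (k.-1 < n)%N by lia.
have pM : (r + r - i < n)%N by lia.
pose X : 'I_n := Ordinal pX; pose Y : 'I_n := Ordinal pY; pose M : 'I_n := Ordinal pM.
have nXY : X != Y by apply/eqP => /(congr1 val) /=; lia.
rewrite (@eBE r s i k X Y) //; try lia.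
rewrite Ee_sym //.
apply: (@Dswap Y X M M Y) => //; try lia.
- by rewrite -Ee_sym //; apply: Ee_wbd => /=; lia.
- by rewrite eq_sym.
- by apply: TfalseY => /=; [apply/andP; split; lia | lia].
- by apply/eqP => /(congr1 val) /=; lia.
- by rewrite /=; lia.
- by right.
- by rewrite /=; apply/idP/idP => h; lia.
Qed.

End Main.

Lemma sum_rev (U : nmodType) (F : nat -> U) lo hi N lo' hi' :
  (hi <= N.+1)%N -> lo' = (N.+1 - hi)%N -> hi' = (N.+1 - lo)%N ->
  (\sum_(lo <= i < hi) F (N - i)%N = \sum_(lo' <= i < hi') F i)%R.
Proof.
move=> hN -> ->; elim: hi hN => [|hi IH] hN.
  by rewrite !big_geq //; lia.
case: (leqP hi.+1 lo) => hl.
  by rewrite !big_geq //; lia.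
have hlh : (lo <= hi)%N by lia.
have hN' : (hi <= N.+1)%N by lia.
have hlt : (N.+1 - hi.+1 < N.+1 - lo)%N by lia.
rewrite big_nat_recr //= IH //.
rewrite (@big_ltn _ _ _ (N.+1 - hi.+1)) //.
have -> : (N.+1 - hi.+1).+1 = (N.+1 - hi)%N by lia.
have -> : (N - hi = N.+1 - hi.+1)%N by lia.
by rewrite addrC.
Qed.

Lemma zfact (U : zmodType) (x y z : U) : (x + (- (x + (y + z)) + z + y) = 0)%R.
Proof. by rewrite !opprD !addrA addrN add0r addrNK addNr. Qed.

Unset Implicit Arguments.
Local Open Scope ring_scope.
Theorem mainTheorem7 (r s : nat) (delta : algC) (t : nat)
  (ht1 : (1 <= t)%N) (ht : (t <= minn r s)%N) :
  (forall a : nat, (1 <= a <= t)%N ->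
     mulB r s delta (LB r s delta (r - a + 1) + LB r s delta (r + a)) (tauB r s delta t) = 0) /\
  (forall j : nat, (r + t + 1 <= j <= r + s)%N ->
     mulB r s delta (- (\sum_(r - t + 1 <= i < r.+1) eB r s i j)
                 + \sum_(r + 1 <= i < r + t + 1) trB r s i j)
          (tauB r s delta t) = 0).
Proof.
have tr : (t <= r)%N by lia.
have ts : (t <= s)%N by lia.
rewrite tauE //; split.
  move=> a /andP[a1 at'].
  have c1 : (r - a + 1 <= r)%N by lia.
  have c2 : (r + a <= r)%N = false by lia.
  rewrite /LB c1 c2 !mulBDl mulBNl !mulB_suml mulB_scl Done //.
  rewrite (@big_cat_nat _ _ _ (r - a + 1) 1 r.+1) //=; try lia.
  rewrite (@big_ltn _ _ _ (r - a + 1) r.+1); last by lia.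
  rewrite caseL //; last by rewrite a1.
  set T := Tt r s t.
  have E1 : \sum_(1 <= i < r - a + 1) mulB r s delta (eB r s i (r + a)) (dg T) =
            \sum_(1 <= i < r - a + 1) mulB r s delta (trB r s i (r - a + 1)) (dg T).
    apply: eq_big_nat => i /andP[i1 i2]; apply: caseA => //.
    by rewrite a1.
  have E2 : \sum_((r - a + 1).+1 <= i < r.+1) mulB r s delta (eB r s i (r + a)) (dg T) =
            \sum_(r.+1 <= i < r + a) mulB r s delta (trB r s i (r + a)) (dg T).
    transitivity (\sum_((r - a + 1).+1 <= i < r.+1)
        (fun k => mulB r s delta (trB r s k (r + a)) (dg T)) (r + r + 1 - i)%N).
      apply: eq_big_nat => i /andP[i1 i2]; apply: caseB => //; try lia.
    by apply: (sum_rev (fun k => mulB r s delta (trB r s k (r + a)) (dg T))); lia.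
  by rewrite E1 E2 zfact.
move=> j /andP[j1 j2].
rewrite mulBDl mulBNl !mulB_suml.
set T := Tt r s t.
have E : \sum_(r - t + 1 <= i < r.+1) mulB r s delta (eB r s i j) (dg T) =
         \sum_(r + 1 <= i < r + t + 1) mulB r s delta (trB r s i j) (dg T).
  transitivity (\sum_(r - t + 1 <= i < r.+1)
      (fun k => mulB r s delta (trB r s k j) (dg T)) (r + r + 1 - i)%N).
    apply: eq_big_nat => i /andP[i1 i2]; apply: caseB => //; try lia.
  by apply: (sum_rev (fun k => mulB r s delta (trB r s k j) (dg T))); lia.
by rewrite E addNr.
Qed.
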